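(* Let $f:\Gamma_+\to\mathbb{R}$ be a smooth function which is homogeneous of degree one and monotone increasing. Then $f\in\mathcal{C}_n$ if and only if $f$ is concave and the function $f_{-1}(x_1,\dots,x_n)=\big(f(x_1^{-1},\dots,x_n^{-1})\big)^{-1}$ is concave on $\Gamma_+$.
   Context: $\Gamma_+=\{x\in\mathbb{R}^n: x_i>0\ \forall i\}$. $\mathcal{C}_n$ is the class of functions $f:\Gamma_+\to\mathbb{R}$ which are $C^\infty$, homogeneous of degree one ($f(cx)=cf(x)$ for $c>0$), strictly monotone increasing ($\partial f/\partial x_i>0$ for each $i$), concave, and inverse-concave, meaning $f^*(x_1,\dots,x_n)=-f(x_1^{-1},\dots,x_n^{-1})$ is concave on $\Gamma_+$. *)

(* Defs.v *)
From HB Require Import structures.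
From mathcomp Require Import all_boot all_order all_algebra.
From mathcomp Require Import all_classical all_reals all_analysis.
Set Implicit Arguments. Unset Strict Implicit. Unset Printing Implicit Defensive.
Import Order.TTheory GRing.Theory Num.Theory.
Import numFieldNormedType.Exports.
Local Open Scope classical_set_scope.
Local Open Scope ring_scope.

Section Defs.
Variables (R : realType) (n : nat).
Local Notation V := 'rV[R]_n.

Definition Gamma_plus : set V := [set x | forall i, 0 < x 0 i].

Definition ebasis (i : 'I_n) : V := delta_mx 0 i.

Definition vinv (x : V) : V := map_mx (fun a => a^-1) x.

Definition iter_deriv (vs : seq V) (g : V -> R) : V -> R :=
  foldr (fun v h => fun x => derive h x v) g vs.

Definition smooth_on (U : set V) (g : V -> R) : Prop :=
  forall vs : seq V, forall x, U x ->
    {for x, continuous (iter_deriv vs g)} /\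
    (forall v, derivable (iter_deriv vs g) x v).

Definition homogeneous1_on (U : set V) (g : V -> R) : Prop :=
  forall c x, 0 < c -> U x -> g (c *: x) = c * g x.

Definition strictly_increasing_on (U : set V) (g : V -> R) : Prop :=
  forall x, U x -> forall i, 0 < derive g x (ebasis i).

Definition concave_on (U : set V) (g : V -> R) : Prop :=
  forall x y (t : R), U x -> U y -> 0 <= t <= 1 ->
    (1 - t) * g x + t * g y <= g ((1 - t) *: x + t *: y).

Definition fstar (g : V -> R) : V -> R := fun x => - g (vinv x).

Definition fminus1 (g : V -> R) : V -> R := fun x => (g (vinv x))^-1.

Definition class_C (g : V -> R) : Prop :=
  [/\ smooth_on Gamma_plus g,
      homogeneous1_on Gamma_plus g,
      strictly_increasing_on Gamma_plus g,
      concave_on Gamma_plus g &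
      concave_on Gamma_plus (fstar g)].

End Defs.

(* Main.v *)
Require Import Defs.
From HB Require Import structures.
From mathcomp Require Import all_boot all_order all_algebra.
From mathcomp Require Import all_classical all_reals all_analysis.
From mathcomp Require Import ring lra.
Import Order.TTheory GRing.Theory Num.Theory.
Import numFieldNormedType.Exports.
Local Open Scope classical_set_scope.
Local Open Scope ring_scope.

Section S.
Variables (R : realType) (n : nat).
Local Notation V := 'rV[R]_n.
Local Notation GP := (@Gamma_plus R n).

Lemma ebasisE (i j : 'I_n) : (@ebasis R n i) 0 j = (j == i)%:R.
Proof. by rewrite /ebasis mxE eqxx. Qed.

Lemma ebasis_ge0 (i j : 'I_n) : 0 <= (@ebasis R n i) 0 j.
Proof. by rewrite ebasisE ler0n. Qed.

Lemma gp_add (y : V) (s : R) i : GP y -> 0 <= s -> GP (s *: (@ebasis R n i) + y).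
Proof.
move=> Hy s0 j; have := mulr_ge0 s0 (ebasis_ge0 i j); have := Hy j.
set e := (@ebasis R n i) 0 j; rewrite !mxE eqxx /= -ebasisE -/e.
lra.
Qed.

Lemma gp_conv (x y : V) t : GP x -> GP y -> 0 <= t <= 1 -> GP ((1 - t) *: x + t *: y).
Proof.
move=> Hx Hy /andP[t0 t1] j; rewrite !mxE; have := Hx j; have := Hy j.
move=> a b; nra.
Qed.

Lemma gp_scale (x : V) c : 0 < c -> GP x -> GP (c *: x).
Proof. by move=> c0 Hx j; rewrite !mxE mulr_gt0. Qed.

Lemma gp_vinv (x : V) : GP x -> GP (vinv x).
Proof. by move=> Hx j; rewrite !mxE invr_gt0. Qed.

Lemma deriv_pos_ex (f : V -> R) z v :
  derivable f z v -> 0 < derive f z v ->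
  exists h : R, 0 < h /\ f z < f (h *: v + z).
Proof.
move=> dv dpos.
have c : (fun h : R => h^-1 *: ((f \o shift z) (h *: v) - f z)) @ 0^' --> derive f z v.
  exact: dv.
have c2 := cvg_dnbhs_at_right c.
have H2 : \forall h \near (0:R)^'+, 0 < h^-1 *: ((f \o shift z) (h *: v) - f z).
  exact: (cvgr_gt _ c2 _ dpos).
have [h [Hh hpos]] := filter_ex (filterI H2 (nbhs_right_gt 0)).
exists h; split => //.
have Hh' : 0 < h^-1 * (f (h *: v + z) - f z) by exact: Hh.
by move: Hh'; rewrite pmulr_rgt0 ?invr_gt0 // subr_gt0.
Qed.

Lemma step (f : V -> R) y s i :
  smooth_on GP f -> strictly_increasing_on GP f -> concave_on GP f ->
  GP y -> 0 < s -> f y < f (s *: (@ebasis R n i) + y).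
Proof.
move=> Hs Hi Hc Hy s0.
set z := s *: (@ebasis R n i) + y.
have Hz : GP z by apply: gp_add => //; exact: ltW.
have dv : derivable f z ((@ebasis R n i)) by exact: ((Hs [::] z Hz).2 ((@ebasis R n i))).
have [h [h0 Hh]] := deriv_pos_ex _ _ _ dv (Hi z Hz i).
have Hw : GP (h *: (@ebasis R n i) + z) by apply: gp_add => //; exact: ltW.
set t := s / (s + h).
have t01 : 0 <= t <= 1.
  apply/andP; split; first by rewrite divr_ge0 // ltW // addr_gt0.
  by rewrite ler_pdivrMr ?addr_gt0 // mul1r lerDl ltW.
have := Hc y (h *: (@ebasis R n i) + z) t Hy Hw t01.
have -> : (1 - t) *: y + t *: (h *: (@ebasis R n i) + z) = z.
  apply/rowP => j; rewrite /z /t !mxE.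
  have sh : s + h != 0 by rewrite gt_eqF // addr_gt0.
  field; exact: sh.
have t1 : t < 1 by rewrite /t ltr_pdivrMr ?addr_gt0 // mul1r ltrDl.
move=> HH.
have tpos : 0 < t by rewrite /t divr_gt0 // addr_gt0.
move: HH Hh t1 tpos.
set a := f y; set b := f z; set c := f (h *: (@ebasis R n i) + z).
move=> HH Hh t1 tpos.
have : t * b < t * c by rewrite ltr_pM2l.
nra.
Qed.


Definition dbl (x : V) (k : nat) : V :=
  \row_j (if (j < k)%N then 2 * x 0 j else x 0 j).

Lemma gp_dbl x k : GP x -> GP (dbl x k).
Proof. move=> Hx j; rewrite mxE; case: ifP => _ //; rewrite mulr_gt0 //. Qed.

Lemma dbl0 x : dbl x 0 = x.
Proof. by apply/rowP => j; rewrite mxE ltn0. Qed.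

Lemma dbln x : dbl x n = 2 *: x.
Proof. by apply/rowP => j; rewrite !mxE ltn_ord. Qed.

Lemma dblS x k (hk : (k < n)%N) :
  dbl x k.+1 = x 0 (Ordinal hk) *: (@ebasis R n (Ordinal hk)) + dbl x k.
Proof.
apply/rowP => j; rewrite !mxE eqxx /= -val_eqE /= ltnS.
case: (ltngtP j k) => jk; rewrite ?mulr0 ?add0r //. have -> : Ordinal hk = j by apply: val_inj.
by rewrite mulr1; ring.
Qed.


Lemma f_pos (f : V -> R) :
  smooth_on GP f -> homogeneous1_on GP f -> strictly_increasing_on GP f ->
  concave_on GP f -> (0 < n)%N -> forall x, GP x -> 0 < f x.
Proof.
move=> Hs Hh Hi Hc n0 x Hx.
have chain : forall k, (k <= n)%N -> f x <= f (dbl x k) /\ ((0 < k)%N -> f x < f (dbl x k)).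
  elim => [|k IH] kn; first by rewrite dbl0; split.
  have [IH1 _] := IH (ltnW kn).
  rewrite (dblS x k kn).
  have := step f (dbl x k) (x 0 (Ordinal kn)) (Ordinal kn) Hs Hi Hc (gp_dbl x k Hx) (Hx _).
  move=> H; split; [exact: ltW (le_lt_trans IH1 H) | move=> _; exact: le_lt_trans IH1 H].
have [_ H] := chain n (leqnn n).
have := H n0; rewrite dbln Hh //; lra.
Qed.

Lemma inv_neg (h : V -> R) : (forall x, GP x -> 0 < h x) -> concave_on GP h ->
  concave_on GP (fun x => - (h x)^-1).
Proof.
move=> Hp Hc x y t Hx Hy t01.
have Hz := gp_conv x y t Hx Hy t01.
have := Hc x y t Hx Hy t01.
have := Hp _ Hz; have := Hp _ Hx; have := Hp _ Hy.
set a := h x; set b := h y; set c := h _.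
move=> b0 a0 c0 Hm.
case/andP: t01 => t0 t1.
set m := (1 - t) * a + t * b.
have m0 : 0 < m by rewrite /m; nra.
have e1 : c^-1 <= m^-1 by rewrite lef_pV2 ?posrE.
have e2 : (1 - t) / a + t / b - m^-1 = t * (1 - t) * (a - b) ^+ 2 / (a * b * m).
  by rewrite /m; field; rewrite -/m (gt_eqF m0) (gt_eqF a0) (gt_eqF b0).
have e3 : 0 <= t * (1 - t) * (a - b) ^+ 2 / (a * b * m).
  have tt : 0 <= t * (1 - t) by rewrite mulr_ge0 // subr_ge0.
  apply: divr_ge0; first by apply: mulr_ge0 => //; exact: sqr_ge0.
  by apply: ltW; rewrite !mulr_gt0.
have : m^-1 <= (1 - t) / a + t / b by rewrite -subr_ge0 e2.
move: e1; rewrite !mulrN; lra.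
Qed.

Lemma inv_conc (g : V -> R) : (forall x, GP x -> 0 < g x) ->
  (forall c x, 0 < c -> GP x -> g (c *: x) = c^-1 * g x) ->
  concave_on GP (fun x => - g x) -> concave_on GP (fun x => (g x)^-1).
Proof.
move=> Hp Hh Hc x y t Hx Hy t01.
have p0 := Hp _ Hx; have q0 := Hp _ Hy.
set p := g x in p0 *; set q := g y in q0 *.
case/andP: t01 => t0 t1.
set S := (1 - t) / p + t / q.
have S0 : 0 < S.
  have : 0 < ((1 - t) * q + t * p) / (p * q) by rewrite divr_gt0 ?mulr_gt0 //; nra.
  suff -> : ((1 - t) * q + t * p) / (p * q) = S by [].
  by rewrite /S; field; rewrite !gt_eqF.
set mu := (t / q) / S.
have mu01 : 0 <= mu <= 1.
  apply/andP; split; first by rewrite /mu !divr_ge0 // ltW.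
  by rewrite /mu ler_pdivrMr // mul1r /S lerDr divr_ge0 ?subr_ge0 // ltW.
have Hx' : GP (p *: x) by exact: gp_scale.
have Hy' : GP (q *: y) by exact: gp_scale.
have gx' : g (p *: x) = 1 by rewrite Hh // mulVf // gt_eqF.
have gy' : g (q *: y) = 1 by rewrite Hh // mulVf // gt_eqF.
have Hw := gp_conv _ _ _ Hx' Hy' mu01.
have := Hc _ _ _ Hx' Hy' mu01; rewrite /= gx' gy'.
set w := (1 - mu) *: (p *: x) + mu *: (q *: y).
move=> Hgw.
have gw0 := Hp _ Hw.
have -> : (1 - t) *: x + t *: y = S *: w.
  apply/rowP => j; rewrite /w /mu !mxE.
  have Sn : S != 0 by rewrite gt_eqF.
  move: Sn; rewrite /S => Sn.
  have pq : 0 < (1 - t) * q + t * p by nra.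
  by field; rewrite !gt_eqF.
rewrite Hh // invfM invrK.
have : g w <= 1 by lra.
move=> gw1.
rewrite -[X in X <= _]mulr1 ler_pM2l //.
by rewrite invf_ge1.
Qed.

End S.



Lemma concave_n0 (R : realType) (F : 'rV[R]_0 -> R) : concave_on (@Gamma_plus R 0) F.
Proof.
move=> x y t _ _ _.
rewrite (thinmx0 x) (thinmx0 y) (thinmx0 ((1 - t) *: 0 + t *: 0)).
by rewrite -mulrDl subrK mul1r.
Qed.

Theorem corollary2p4 (R : realType) (n : nat) (f : 'rV[R]_n -> R) :
  smooth_on (@Gamma_plus R n) f ->
  homogeneous1_on (@Gamma_plus R n) f ->
  strictly_increasing_on (@Gamma_plus R n) f ->
  (class_C f <->
   concave_on (@Gamma_plus R n) f /\ concave_on (@Gamma_plus R n) (fminus1 f)).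
Proof.
move=> Hs Hh Hi.
case: n f Hs Hh Hi => [|n] f Hs Hh Hi.
  split; first by case=> _ _ _ Hc _; split => //; exact: concave_n0.
  by case=> Hc _; split => //; exact: concave_n0.
set g := fun x => f (vinv x).
have vinvZ : forall c (x : 'rV[R]_n.+1), 0 < c -> vinv (c *: x) = c^-1 *: vinv x.
  move=> c x c0; apply/rowP => j; rewrite !mxE invfM mulrC //.
have gh : forall c x, 0 < c -> Gamma_plus x -> g (c *: x) = c^-1 * g x.
  move=> c x c0 Hx; rewrite /g vinvZ // Hh ?invr_gt0 //; exact: gp_vinv.
split.
  case=> _ _ _ Hc Hst; split => //.
  have gp : forall x, Gamma_plus x -> 0 < g x.
    move=> x Hx; exact: (@f_pos _ _ f Hs Hh Hi Hc (ltn0Sn n) _ (gp_vinv _ _ _ Hx)).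
  exact: (@inv_conc _ _ g gp gh Hst).
case=> Hc Hm; split => //.
have gp : forall x, Gamma_plus x -> 0 < g x.
  move=> x Hx; exact: (@f_pos _ _ f Hs Hh Hi Hc (ltn0Sn n) _ (gp_vinv _ _ _ Hx)).
have hp : forall x, Gamma_plus x -> 0 < (g x)^-1 by move=> x Hx; rewrite invr_gt0 gp.
have := @inv_neg _ _ _ hp Hm.
move=> H x y t Hx Hy t01; have := H x y t Hx Hy t01.
by rewrite /= !invrK.
Qed.
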